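(* The following hold. (1) If $G$ is a finite elementary abelian $2$-group, then $\Gamma^+_{G,H}$ admits a perfect code for every subgroup $H$ of $G$. (2) If $G$ is a finite abelian group of odd order, then $\Gamma^+_{G,H}$ admits a perfect code if and only if $H\in\{\{0\},G\}$. (3) If $n$ is an even positive integer and $H\le\mathbb{Z}_n$, then $\Gamma^+_{\mathbb{Z}_n,H}$ admits a perfect code if and only if $H\in\{\mathbb{Z}_n,\{0\},\langle 2\rangle\}$. (4) If $G=\mathbb{Z}_4^n$ for some $n\ge1$ and $H\le G$, then $\Gamma^+_{G,H}$ admits a perfect code if and only if $H\in\{\{0\},G\}$ or $H$ contains all involutions of $G$.
   Context: Abelian groups are written additively with identity $0$. For a subgroup $H$ of a finite abelian group $G$, the extended subgroup sum graph $\Gamma^+_{G,H}$ is the simple undirected graph with vertex set $G$ in which distinct vertices $x,y$ are adjacent if and only if $x+y\in H$. A perfect code in a graph is a set $C$ of vertices that is independent and such that every vertex not in $C$ is adjacent to exactly one vertex of $C$. An involution is an element of order exactly $2$. *)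

(* Defs.v *)
From mathcomp Require Import all_boot all_order all_algebra.
Set Implicit Arguments. Unset Strict Implicit. Unset Printing Implicit Defensive.
Import GRing.Theory.
Local Open Scope ring_scope.

(* Finite abelian groups are finite Z-modules (additive notation). *)

Definition is_subgroup (G : finZmodType) (H : {set G}) : Prop :=
  0 \in H /\ (forall x y, x \in H -> y \in H -> x - y \in H).

Definition sum_adj (G : finZmodType) (H : {set G}) (x y : G) : bool :=
  (x != y) && (x + y \in H).

Definition perfect_code (G : finZmodType) (H : {set G}) (C : {set G}) : Prop :=
  (forall x y, x \in C -> y \in C -> ~~ sum_adj H x y) /\
  (forall x, x \notin C -> #|[set c in C | sum_adj H x c]| = 1%N).

Definition has_perfect_code (G : finZmodType) (H : {set G}) : Prop :=
  exists C : {set G}, perfect_code H C.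

Definition cyc (G : finZmodType) (g : G) : {set G} :=
  [set g *+ (nat_of_ord k) | k : 'I_#|G|].

Definition involution (G : finZmodType) (x : G) : Prop := x != 0 /\ x + x = 0.

(* Main.v *)
Require Import Defs.
From mathcomp Require Import all_boot all_order all_algebra.
From mathcomp Require Import cyclic.
Import GRing.Theory.
Local Open Scope ring_scope.

Section Gen.
Variable G : finZmodType.
Variable H : {set G}.
Hypothesis hH : is_subgroup H.

Lemma mem0 : 0 \in H. Proof. by case: hH. Qed.
Lemma memB {x y} : x \in H -> y \in H -> x - y \in H. Proof. by case: hH => _; apply. Qed.
Lemma memN {x} : x \in H -> - x \in H.
Proof. by move=> hx; rewrite -sub0r memB // mem0. Qed.
Lemma memD {x y} : x \in H -> y \in H -> x + y \in H.
Proof. by move=> hx hy; rewrite -(opprK y) memB // memN. Qed.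

Definition rk (x : G) : nat := enum_rank x.
Lemma rk_inj : injective rk.
Proof. by move=> x y h; apply: enum_rank_inj; apply: ord_inj. Qed.

Lemma suff1 : (forall a, a + a \in H) -> has_perfect_code H.
Proof.
move=> h2.
have addsub x y : (x + y \in H) = (x - y \in H).
  apply/idP/idP => hx.
    by have := memB hx (h2 y); rewrite opprD addrA addrK.
  by have := memD hx (h2 y); rewrite addrA subrK.
pose C := [set x | [forall y, (x - y \in H) ==> (rk x <= rk y)%N]].
have minP x : exists2 m, x - m \in H & m \in C.
  pose P n := [exists y, (x - y \in H) && (rk y == n)].
  have ex : exists n, P n by exists (rk x); apply/existsP; exists x; rewrite subrr mem0 eqxx.
  case: (ex_minnP ex) => n /existsP [m /andP [hm /eqP hn]] hmin.
  exists m => //; rewrite inE; apply/forallP => y; apply/implyP => hy.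
  rewrite hn; apply: hmin; apply/existsP; exists y; rewrite eqxx andbT.
  by have := memD hm hy; rewrite addrA subrK.
have uniqC c c' : c \in C -> c' \in C -> c - c' \in H -> c = c'.
  rewrite !inE => /forallP hc /forallP hc' hcc; apply: rk_inj; apply/eqP.
  rewrite eqn_leq (implyP (hc c') hcc) (implyP (hc' c)) //.
  by have := memN hcc; rewrite opprB.
exists C; split.
  move=> x y hx hy; apply/negP => /andP [hne hs].
  by move/negP: hne; apply; apply/eqP; apply: uniqC => //; rewrite -addsub.
move=> x hx; case: (minP x) => m hm mC.
apply/eqP/cards1P; exists m; apply/setP => c; rewrite !inE /sum_adj.
apply/idP/idP.
  case/andP => cC /andP [_ hxc]; apply/eqP; apply: (uniqC c m) => //; first by rewrite inE.
  have := memB hm (eqbLR (addsub x c) hxc).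
  by rewrite opprB addrC addrA subrK.
move/eqP => ->; rewrite addsub hm andbT; apply/andP; split; first by move: mC; rewrite inE.
by apply/eqP => exm; move: hx; rewrite exm mC.
Qed.

Lemma suff0 : H = [set 0] -> has_perfect_code H.
Proof.
move=> ->.
pose C := [set x : G | (rk x <= rk (- x))%N].
exists C; split.
  move=> x y; rewrite !inE /sum_adj => hx hy; apply/negP => /andP [hne].
  rewrite inE addr_eq0 => /eqP hxy.
  move: hne hx hy; rewrite hxy opprK => hne h1 h2.
  by case/negP: hne; apply/eqP/rk_inj/eqP; rewrite eqn_leq h1 h2.
move=> x; rewrite inE -ltnNge => hx.
apply/eqP/cards1P; exists (- x); apply/setP => c; rewrite !inE /sum_adj.
apply/idP/idP.
  by case/and3P => _ _; rewrite inE addr_eq0 eq_sym => /eqP <-; rewrite opprK.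
move/eqP => ->; rewrite opprK inE subrr eqxx andbT (ltnW hx) /=.
by apply/eqP => e; move: hx; rewrite -e ltnn.
Qed.

Lemma nec : has_perfect_code H -> H != [set 0] -> forall a, a + a \in H.
Proof.
case=> C [hind hone] hne.
have [h hH1 hh0] : exists2 h, h \in H & h != 0.
  case: (boolP [exists h, (h \in H) && (h != 0)]).
    by case/existsP => h /andP [] ??; exists h.
  move=> hn; case/eqP: hne; apply/setP => z; rewrite inE.
  apply/idP/idP; last by move/eqP ->; apply: mem0.
  move=> hz; apply/negPn/negP => nz; case/negP: hn; apply/existsP; exists z.
  by rewrite hz.
move=> a; apply/negPn/negP => ha.
have [b bC hb] : exists2 b, b \in C & b + b \notin H.
  case: (boolP (a \in C)) => aC; first by exists a.
  have : (0 < #|[set c in C | sum_adj H a c]|)%N by rewrite hone.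
  case/card_gt0P => c; rewrite inE /sum_adj => /andP [cC /andP [_ hac]].
  exists c => //; apply/negP => hc; case/negP: ha.
  have := memB (memD hac hac) hc.
  by rewrite addrACA addrK.
have hbn : b != - b.
  by apply/eqP => e; case/negP: hb; rewrite {2}e subrr mem0.
case: (boolP (b + h \in C)) => bhC.
  have nbC : - b \notin C.
    apply/negP => nbC; move: (hind _ _ bC nbC); rewrite /sum_adj hbn subrr mem0.
    by [].
  have /eqP/cards1P [c hc] := hone _ nbC.
  have : b \in [set c0 in C | sum_adj H (- b) c0].
    by rewrite inE bC /sum_adj eq_sym hbn addNr mem0.
  have : b + h \in [set c0 in C | sum_adj H (- b) c0].
    rewrite inE bhC /sum_adj addrA addNr add0r hH1 andbT.
    apply/negP => /eqP e; case/negP: hb.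
    have -> : b + b = - h.
      by apply/eqP; rewrite -subr_eq0 opprK -addrA -e subrr.
    by rewrite memN.
  rewrite hc !inE => /eqP e1 /eqP e2; case/negP: hh0.
  by rewrite -e2 in e1; apply/eqP; move: e1 => /eqP; rewrite -subr_eq0 addrAC subrr add0r => /eqP.
have : (0 < #|[set c in C | sum_adj H (b + h)%R c]|)%N by rewrite hone.
case/card_gt0P => c; rewrite inE /sum_adj => /andP [cC /andP [_ hbc]].
move: (hind _ _ bC cC); rewrite /sum_adj.
have -> : b + c \in H.
  by have := memB hbc hH1; rewrite addrAC addrK.
rewrite andbT negbK => /eqP e; case/negP: hb.
by have := memB hbc hH1; rewrite e addrAC addrK.
Qed.

Lemma pc_iff : has_perfect_code H <-> (H = [set 0] \/ forall a, a + a \in H).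
Proof.
split.
  move=> hp; case: (boolP (H == [set 0])) => [/eqP|] h; first by left.
  by right; apply: nec.
by case; [apply: suff0 | apply: suff1].
Qed.
End Gen.

Lemma F1 : forall z : 'Z_4, z + z + (z + z) = 0.
Proof. by case=> [[|[|[|[|k]]]] hk] //; apply/val_inj. Qed.
Lemma F2 : forall z : 'Z_4, z + z = 0 -> z = (if z == 0 then 0 else 1) + (if z == 0 then 0 else 1).
Proof. case=> [[|[|[|[|k]]]] hk] // /(congr1 val) //=; try by move=> _; apply/val_inj. Qed.

Lemma odd_half (G : finZmodType) : odd #|G| -> forall x : G, x + x = 0 -> x = 0.
Proof.
move=> ho x hx.
have e := @expg_cardG _ (fingroup.setT_group (FinRing.Zmodule_to_finGroup G)) x (in_setT x).
rewrite FinRing.zmodXgE cardsT -(odd_double_half #|G|) ho -muln2 mulnC mulrnDr mulrnA mulr2n hx mul0rn addr0 in e.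
move: e; rewrite /= mulr1n => ->. done.
Qed.

Lemma part2 (G : finZmodType) : odd #|G| ->
     forall H : {set G}, is_subgroup H ->
       (has_perfect_code H <-> H = [set 0] \/ H = [set: G]).
Proof.
move=> ho H hH; have [i1 i2] := @pc_iff _ _ hH; split.
  move/i1 => [h|h]; first by left.
  right; apply/eqP; rewrite eqEcard subsetT /=.
  have inj : injective (fun x : G => x + x).
    move=> x y e; apply/eqP; rewrite -subr_eq0; apply/eqP/odd_half => //.
    by rewrite addrACA e -opprD subrr.
  rewrite -(card_imset [set: G] inj) subset_leq_card //.
  by apply/subsetP => z /imsetP [x _ ->]; apply: h.
by case=> h; apply: i2; [left | right; rewrite h => a; rewrite inE].
Qed.

Lemma memMn (G : finZmodType) (H : {set G}) : is_subgroup H ->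
  forall x k, x \in H -> x *+ k \in H.
Proof.
move=> hH x k hx; elim: k => [|k ih]; first by rewrite mulr0n mem0.
by rewrite mulrS memD.
Qed.

Lemma Zcard m : #|'Z_(m.+2)| = m.+2.
Proof. by rewrite card_ord. Qed.

Lemma incyc m (k : nat) : (k < m.+2)%N -> (2%:R : 'Z_(m.+2)) *+ k \in cyc (2%:R : 'Z_(m.+2)).
Proof.
move=> hk; apply/imsetP.
have hk' : (k < #|'Z_(m.+2)|)%N by rewrite Zcard.
by exists (Ordinal hk').
Qed.

Lemma twoE m (k : nat) : (2%:R : 'Z_(m.+2)) *+ k = k%:R + k%:R.
Proof. by rewrite -mulr2n -!mulrnA mulnC. Qed.

Lemma z_iff m (H : {set 'Z_(m.+2)}) : is_subgroup H ->
  ((forall a, a + a \in H) <-> H = [set: 'Z_(m.+2)] \/ H = cyc (2%:R : 'Z_(m.+2))).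
Proof.
move=> hH; split; last first.
  case=> ->; first by move=> a; rewrite inE.
  move=> a; rewrite -(natr_Zp a) -twoE; apply: incyc; exact: ltn_ord.
move=> h2.
have cycsub : cyc (2%:R : 'Z_(m.+2)) \subset H.
  by apply/subsetP => y /imsetP [k _ ->]; rewrite twoE h2.
case: (boolP (1 \in H)) => h1.
  left; apply/setP => x; rewrite inE -(natr_Zp x); exact: memMn.
right; apply/eqP; rewrite eqEsubset cycsub andbT; apply/subsetP => x hx.
have hxx : (x : 'Z_(m.+2)) = ((x : nat)./2)%:R *+ 2 + (odd x)%:R.
  by rewrite -{1}(natr_Zp x) -{1}(odd_double_half x) natrD addrC -muln2 natrM mulr_natr.
case: (boolP (odd x)) => ox.
  case/negP: h1; have := @memB _ _ hH _ _ hx (h2 (((x : nat)./2)%:R)).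
  by rewrite {1}hxx ox mulr2n addrAC subrr add0r.
rewrite hxx (negbTE ox) addr0 mulr2n -twoE; apply: incyc.
apply: leq_ltn_trans (ltn_ord x); rewrite leq_half_double -addnn; apply: ltnW; by rewrite ltnS leq_addr.
Qed.

Lemma r_iff n (H : {set 'rV['Z_4]_n}) : is_subgroup H ->
  ((forall a, a + a \in H) <-> H = [set: 'rV['Z_4]_n] \/ (forall x : 'rV['Z_4]_n, involution x -> x \in H)).
Proof.
move=> hH; split.
  move=> h2; right => x [_ hx].
  pose a : 'rV['Z_4]_n := \row_i (if x 0 i == 0 then 0 else 1).
  suff -> : x = a + a by apply: h2.
  apply/rowP => i; rewrite !mxE; apply: F2.
  by have := congr1 (fun M : 'rV['Z_4]_n => M 0 i) hx; rewrite /= !mxE.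
case=> [-> a|hi a]; first by rewrite inE.
case: (boolP (a + a == 0)) => [/eqP ->|nz]; first exact: (@mem0 _ _ hH).
apply: hi; split => //.
by apply/rowP => i; rewrite !mxE F1.
Qed.

Theorem corollary6p2 :
  (* (1) elementary abelian 2-groups *)
  (forall (G : finZmodType), (forall x : G, x + x = 0) ->
     forall H : {set G}, is_subgroup H -> has_perfect_code H) /\
  (* (2) odd order *)
  (forall (G : finZmodType), odd #|G| ->
     forall H : {set G}, is_subgroup H ->
       (has_perfect_code H <-> H = [set 0] \/ H = [set: G])) /\
  (* (3) Z_n, n even positive *)
  (forall n : nat, (0 < n)%N -> ~~ odd n ->
     forall H : {set 'Z_n}, is_subgroup H ->
       (has_perfect_code H <->
          H = [set: 'Z_n] \/ H = [set 0] \/ H = cyc (2%:R : 'Z_n))) /\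
  (* (4) Z_4^n, n >= 1 *)
  (forall n : nat, (1 <= n)%N ->
     forall H : {set 'rV['Z_4]_n}, is_subgroup H ->
       (has_perfect_code H <->
          H = [set 0] \/ H = [set: 'rV['Z_4]_n] \/
          (forall x : 'rV['Z_4]_n, involution x -> x \in H))).
Proof.
split.
  move=> G hG H hH; apply: (proj2 (@pc_iff _ _ hH)); right => a.
  by rewrite hG (@mem0 _ _ hH).
split; first exact: part2.
split.
  case=> [|[|m]] // _ _ H hH.
  have [i1 i2] := @pc_iff _ _ hH; have [j1 j2] := @z_iff _ _ hH.
  split.
    case/i1 => [h|/j1 [h|h]]; by [right; left | left | right; right].
  case=> [h|[h|h]]; apply: i2; by [right; apply: j2; left | left | right; apply: j2; right].
move=> n _ H hH.
have [i1 i2] := @pc_iff _ _ hH; have [j1 j2] := @r_iff _ _ hH.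
split.
  case/i1 => [h|/j1 [h|h]]; by [left | right; left | right; right].
case=> [h|[h|h]]; apply: i2; by [left | right; apply: j2; left | right; apply: j2; right].
Qed.
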